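(* In the simplified FaRMv2 protocol described in the context, every transaction $T$ (committed or aborted) works on a consistent snapshot of object values taken at its read timestamp $rts$: for every object that $T$ successfully reads, the version it reads is the latest version of that object ever written with timestamp at most $rts$, and the global time $rts$ occurs during the execution of $T$ (between its start and the completion of its read-timestamp acquisition).
   Context: Global time means the time at a distinguished clock master. Each machine has a local clock whose rate differs from that of global time by a relative factor of at most a known drift bound $\epsilon$. The function TIME() returns an interval $[L,U]$ such that the global time at the moment of the call lies in $[L,U]$. The function GET\_TS is: $[L,U] \gets \mathrm{TIME}()$; sleep for $(U-L)(1+\epsilon)$ units of local time; return $U$. The data consists of objects, each having a lock bit and a set of versions, each version tagged with a timestamp (the write timestamp of the transaction that wrote it). ReadAtTs$(R,ts)$: if $R$ is locked return NULL; otherwise return the version of $R$ with the highest timestamp $\le ts$, or NULL if none is available. LockAtTs$(R,ts)$: if $R$ is locked or $R$ has timestamp $\ge ts$ return NULL; otherwise lock $R$. A transaction with read set RSet and write set WSet executes ExecuteAndCommit(RSet, WSet): $rts \gets$ GET\_TS; for each $R\in$ RSet, if ReadAtTs$(R,rts)$ returns NULL then abort; if WSet is empty, commit (read-only transaction); otherwise for each $W\in$ WSet, if LockAtTs$(W,rts)$ returns NULL then abort; then $wts \gets$ GET\_TS (performed while holding the locks); then for each $R \in$ RSet $\setminus$ WSet, if $R$ is locked or $R$ has timestamp $> rts$, abort (validation failure); then install for each object in WSet a new version with timestamp $wts$, unlock all objects, and commit. Here $rts$ is the transaction's read timestamp and $wts$ its write timestamp. *)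

(* Defs.v *)
From Stdlib Require Import Reals Lra List.
Import ListNotations.
Open Scope R_scope.

Definition Obj := nat.
Definition TxId := nat.
Definition Machine := nat.

Record version := Ver { vts : R; vwriter : TxId }.

(* Static description of the system:
   - eps : drift bound
   - clk m : global time -> local time of machine m
   - mach T : machine executing transaction T
   - rset T, wset T : read and write sets of transaction T *)
Record system := mkSystem {
  eps : R;
  clk : Machine -> R -> R;
  mach : TxId -> Machine;
  rset : TxId -> list Obj;
  wset : TxId -> list Obj }.

Definition drift_bounded (S : system) : Prop :=
  0 <= eps S /\
  forall m t1 t2, t1 <= t2 ->
    (1 - eps S) * (t2 - t1) <= clk S m t2 - clk S m t1 <= (1 + eps S) * (t2 - t1).

Inductive phase :=
| Idle
| SleepR (L U g : R)            (* GET_TS for rts: TIME() called at global time g returned [L,U]; sleeping *)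
| Reading (rts : R) (todo : list Obj)
| Locking (rts : R) (todo held : list Obj)
| SleepW (rts : R) (held : list Obj) (L U g : R)     (* GET_TS for wts, holding locks *)
| Validating (rts wts : R) (todo held : list Obj)
| Installing (wts : R) (todo held : list Obj)
| Releasing (commit : bool) (held : list Obj)
| Done (commit : bool).

Record state := mkState {
  locked : Obj -> bool;
  vers : Obj -> list version;
  ph : TxId -> phase }.

Definition initial_state (init : Obj -> list version) : state :=
  mkState (fun _ => false) init (fun _ => Idle).

Inductive event :=
| ETime (T : TxId) (L U : R)                (* call to TIME() returning [L,U] *)
| EWake (T : TxId)                          (* end of the sleep of GET_TS *)
| ERead (T : TxId) (o : Obj) (rts : R) (res : option version)
| ELock (T : TxId) (o : Obj) (ok : bool)
| EValidate (T : TxId) (o : Obj) (ok : bool)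
| EInstall (T : TxId) (o : Obj)
| EUnlock (T : TxId) (o : Obj)
| ETau (T : TxId).

Definition ev_tx (e : event) : TxId :=
  match e with
  | ETime T _ _ | EWake T | ERead T _ _ _ | ELock T _ _ | EValidate T _ _
  | EInstall T _ | EUnlock T _ | ETau T => T
  end.

Definition set_ph (s : state) (T : TxId) (p : phase) : state :=
  mkState (locked s) (vers s) (fun T' => if Nat.eqb T' T then p else ph s T').

Definition set_lock (s : state) (o : Obj) (b : bool) : state :=
  mkState (fun o' => if Nat.eqb o' o then b else locked s o') (vers s) (ph s).

Definition add_version (s : state) (o : Obj) (v : version) : state :=
  mkState (locked s) (fun o' => if Nat.eqb o' o then v :: vers s o else vers s o') (ph s).

Definition validation_set (S : system) (T : TxId) : list Obj :=
  filter (fun r => negb (existsb (Nat.eqb r) (wset S T))) (rset S T).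

Inductive step (S : system) : state -> R -> event -> state -> Prop :=
| st_time_r : forall s t T L U,
    ph s T = Idle -> L <= t <= U ->
    step S s t (ETime T L U) (set_ph s T (SleepR L U t))
| st_wake_r : forall s t T L U g,
    ph s T = SleepR L U g ->
    clk S (mach S T) t - clk S (mach S T) g >= (U - L) * (1 + eps S) ->
    step S s t (EWake T) (set_ph s T (Reading U (rset S T)))
| st_read_ok : forall s t T rts o todo v,
    ph s T = Reading rts (o :: todo) ->
    locked s o = false ->
    In v (vers s o) -> vts v <= rts ->
    (forall v', In v' (vers s o) -> vts v' <= rts -> vts v' <= vts v) ->
    step S s t (ERead T o rts (Some v)) (set_ph s T (Reading rts todo))
| st_read_fail : forall s t T rts o todo,
    ph s T = Reading rts (o :: todo) ->
    (locked s o = true \/ forall v, In v (vers s o) -> rts < vts v) ->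
    step S s t (ERead T o rts None) (set_ph s T (Done false))
| st_ro_commit : forall s t T rts,
    ph s T = Reading rts [] -> wset S T = [] ->
    step S s t (ETau T) (set_ph s T (Done true))
| st_to_lock : forall s t T rts,
    ph s T = Reading rts [] -> wset S T <> [] ->
    step S s t (ETau T) (set_ph s T (Locking rts (wset S T) []))
| st_lock_ok : forall s t T rts o todo held,
    ph s T = Locking rts (o :: todo) held ->
    locked s o = false ->
    (forall v, In v (vers s o) -> vts v < rts) ->
    step S s t (ELock T o true)
      (set_ph (set_lock s o true) T (Locking rts todo (o :: held)))
| st_lock_fail : forall s t T rts o todo held,
    ph s T = Locking rts (o :: todo) held ->
    (locked s o = true \/ exists v, In v (vers s o) /\ rts <= vts v) ->
    step S s t (ELock T o false) (set_ph s T (Releasing false held))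
| st_time_w : forall s t T rts held L U,
    ph s T = Locking rts [] held -> L <= t <= U ->
    step S s t (ETime T L U) (set_ph s T (SleepW rts held L U t))
| st_wake_w : forall s t T rts held L U g,
    ph s T = SleepW rts held L U g ->
    clk S (mach S T) t - clk S (mach S T) g >= (U - L) * (1 + eps S) ->
    step S s t (EWake T) (set_ph s T (Validating rts U (validation_set S T) held))
| st_val_ok : forall s t T rts wts o todo held,
    ph s T = Validating rts wts (o :: todo) held ->
    locked s o = false ->
    (forall v, In v (vers s o) -> vts v <= rts) ->
    step S s t (EValidate T o true) (set_ph s T (Validating rts wts todo held))
| st_val_fail : forall s t T rts wts o todo held,
    ph s T = Validating rts wts (o :: todo) held ->
    (locked s o = true \/ exists v, In v (vers s o) /\ rts < vts v) ->
    step S s t (EValidate T o false) (set_ph s T (Releasing false held))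
| st_val_done : forall s t T rts wts held,
    ph s T = Validating rts wts [] held ->
    step S s t (ETau T) (set_ph s T (Installing wts (wset S T) held))
| st_install : forall s t T wts o todo held,
    ph s T = Installing wts (o :: todo) held ->
    step S s t (EInstall T o)
      (set_ph (add_version s o (Ver wts T)) T (Installing wts todo held))
| st_inst_done : forall s t T wts held,
    ph s T = Installing wts [] held ->
    step S s t (ETau T) (set_ph s T (Releasing true held))
| st_release : forall s t T c o held,
    ph s T = Releasing c (o :: held) ->
    step S s t (EUnlock T o) (set_ph (set_lock s o false) T (Releasing c held))
| st_rel_done : forall s t T c,
    ph s T = Releasing c [] ->
    step S s t (ETau T) (set_ph s T (Done c)).

(* A finite execution from state s: a list of (global time, event, resulting
   state), with strictly increasing global times; [last] is the time of the
   previous step, if any. *)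
Fixpoint exec (S : system) (s : state) (last : option R)
    (tr : list (R * event * state)) : Prop :=
  match tr with
  | [] => True
  | (t, e, s') :: tr' =>
      match last with None => True | Some l => l < t end /\
      step S s t e s' /\ exec S s' (Some t) tr'
  end.

Definition ever_version (s0 : state) (tr : list (R * event * state))
    (o : Obj) (v : version) : Prop :=
  In v (vers s0 o) \/
  exists i t e s, nth_error tr i = Some (t, e, s) /\ In v (vers s o).

(* Main.v *)
Require Import Defs.
From Stdlib Require Import Reals Lra List Lia.
Import ListNotations.
Open Scope R_scope.
Notation succ := Datatypes.S.

Lemma exec_times S tr : forall s l, exec S s (Some l) tr ->
  forall m t e s', nth_error tr m = Some (t,e,s') -> l < t.
Proof.
  induction tr as [|[[t0 e0] s0] tr IH]; intros s l H m t e s' Hm.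
  - destruct m; discriminate.
  - destruct H as [Hl [_ Hr]]. destruct m as [|m]; simpl in Hm.
    + injection Hm; intros; subst; lra.
    + pose proof (IH _ _ Hr _ _ _ _ Hm). lra.
Qed.

Lemma exec_suffix S tr : forall s l i t e s', exec S s l tr ->
  nth_error tr i = Some (t,e,s') -> exec S s' (Some t) (skipn (succ i) tr).
Proof.
  induction tr as [|[[t0 e0] s0] tr IH]; intros s l i t e s' H Hi.
  - destruct i; discriminate.
  - destruct H as [_ [_ Hr]]. destruct i as [|i]; simpl in Hi.
    + injection Hi; intros; subst; exact Hr.
    + exact (IH _ _ _ _ _ _ Hr Hi).
Qed.

Lemma step_at S tr : forall s l i t e s', exec S s l tr ->
  nth_error tr i = Some (t,e,s') ->
  exists sb, step S sb t e s' /\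
    ((i = 0%nat /\ sb = s) \/ exists i' t' e', i = succ i' /\ nth_error tr i' = Some (t',e',sb)).
Proof.
  induction tr as [|[[t0 e0] s0] tr IH]; intros s l i t e s' H Hi.
  - destruct i; discriminate.
  - destruct H as [_ [Hs Hr]]. destruct i as [|i]; simpl in Hi.
    + injection Hi; intros; subst. exists s. split; auto.
    + destruct (IH _ _ _ _ _ _ Hr Hi) as [sb [Hst [[-> ->]|[i' [t' [e' [-> Hi']]]]]]].
      * exists s0. split; auto. right. exists 0%nat, t0, e0. auto.
      * exists sb. split; auto. right. exists (succ i'), t', e'. auto.
Qed.

Lemma time_mono S tr s l : exec S s l tr -> forall j n tj ej sj tn en sn, (j < n)%nat ->
  nth_error tr j = Some (tj,ej,sj) -> nth_error tr n = Some (tn,en,sn) -> tj < tn.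
Proof.
  intros H j n tj ej sj tn en sn Hjn Hj Hn.
  pose proof (exec_suffix _ _ _ _ _ _ _ _ H Hj) as Hs.
  apply (exec_times _ _ _ _ Hs (n - succ j) tn en sn).
  rewrite nth_error_skipn. replace (succ j + (n - succ j))%nat with n by lia. exact Hn.
Qed.

Lemma exec_inv S (P : state -> Prop) (Q : R -> Prop) :
  (forall s t e s', P s -> Q t -> step S s t e s' -> P s') ->
  forall tr s l, exec S s l tr -> P s ->
  (forall m t e s', nth_error tr m = Some (t,e,s') -> Q t) ->
  forall m t e s', nth_error tr m = Some (t,e,s') -> P s'.
Proof.
  intros Hp tr. induction tr as [|[[t0 e0] s0] tr IH]; intros s l H Ps HQ m t e s' Hm.
  - destruct m; discriminate.
  - destruct H as [_ [Hs Hr]].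
    assert (P0 : P s0) by (apply (Hp s t0 e0 s0); auto; apply (HQ 0%nat t0 e0 s0); reflexivity).
    destruct m as [|m]; simpl in Hm.
    + injection Hm; intros; subst; auto.
    + apply (IH s0 (Some t0) Hr P0 (fun m' t' e' s'' Hm' => HQ (succ m') t' e' s'' Hm') m t e s' Hm).
Qed.

Definition held_of (p : phase) : list Obj :=
  match p with
  | Locking _ _ h | SleepW _ h _ _ _ | Validating _ _ _ h | Installing _ _ h | Releasing _ h => h
  | _ => [] end.

Definition cover (S : system) (W : TxId) (p : phase) : Prop :=
  match p with
  | Locking _ todo h => forall o, In o (wset S W) -> In o todo \/ In o h
  | SleepW _ h _ _ _ | Validating _ _ _ h => forall o, In o (wset S W) -> In o h
  | Installing _ todo h => (forall o, In o (wset S W) -> In o h) /\ (forall o, In o todo -> In o (wset S W))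
  | _ => True end.

Definition G S (s : state) : Prop :=
  forall W, NoDup (held_of (ph s W)) /\
   (forall o, In o (held_of (ph s W)) -> locked s o = true) /\
   (forall W' o, W' <> W -> In o (held_of (ph s W)) -> ~ In o (held_of (ph s W'))) /\
   cover S W (ph s W).

Lemma G_set_same S s T p : G S s -> held_of p = held_of (ph s T) -> cover S T p -> G S (set_ph s T p).
Proof.
  intros HG Hh Hc W. unfold set_ph; simpl.
  destruct (Nat.eqb_spec W T) as [->|HWT].
  - rewrite Hh. destruct (HG T) as [A [B [C _]]]. split; [|split; [|split]]; auto.
    intros W' o HW' Ho. destruct (Nat.eqb_spec W' T); [congruence|]. apply (C W' o HW' Ho).
  - destruct (HG W) as [A [B [C D]]]. split; [|split; [|split]]; auto.
    intros W' o HW' Ho. destruct (Nat.eqb_spec W' T) as [->|]; [rewrite Hh|]; apply (C _ o HW' Ho).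
Qed.

Lemma G_lock S s T rts o todo held : G S s -> ph s T = Locking rts (o::todo) held -> locked s o = false ->
  G S (set_ph (set_lock s o true) T (Locking rts todo (o::held))).
Proof.
  intros HG Hp Hl.
  assert (Hfree : forall W, ~ In o (held_of (ph s W))).
  { intros W Hin. destruct (HG W) as [_ [B _]]. rewrite (B o Hin) in Hl. discriminate. }
  intros W. unfold set_ph, set_lock; simpl.
  destruct (Nat.eqb_spec W T) as [->|HWT].
  - destruct (HG T) as [A [B [C D]]]. rewrite Hp in A, B, C, D. simpl in A, B, C, D.
    split; [|split; [|split]].
    + constructor; auto. specialize (Hfree T). rewrite Hp in Hfree. exact Hfree.
    + intros o' [<-|Ho']. rewrite Nat.eqb_refl; auto. destruct (Nat.eqb o' o); auto.
    + intros W' o' HW' [<-|Ho'].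
      * destruct (Nat.eqb_spec W' T); [congruence|]. apply Hfree.
      * destruct (Nat.eqb_spec W' T); [congruence|]. apply (C W' o' HW' Ho').
    + simpl. intros o' Ho'. specialize (D o' Ho'). simpl in D. tauto.
  - destruct (HG W) as [A [B [C D]]]. split; [|split; [|split]]; auto.
    + intros o' Ho'. destruct (Nat.eqb_spec o' o); auto.
    + intros W' o' HW' Ho'. destruct (Nat.eqb_spec W' T) as [->|].
      * simpl. intros [<-|Hin]. apply (Hfree W Ho'). apply (C T o' HW'); [exact Ho'|]. rewrite Hp. exact Hin.
      * apply C; auto.
Qed.

Lemma G_release S s T c o held : G S s -> ph s T = Releasing c (o::held) ->
  G S (set_ph (set_lock s o false) T (Releasing c held)).
Proof.
  intros HG Hp W. unfold set_ph, set_lock; simpl.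
  destruct (HG T) as [AT [BT [CT _]]]. rewrite Hp in AT, BT, CT. simpl in AT, BT, CT.
  inversion AT as [|x l Hno Hnd].
  destruct (Nat.eqb_spec W T) as [->|HWT].
  - split; [|split; [|split]]; simpl; auto.
    + intros o' Ho'. destruct (Nat.eqb_spec o' o) as [->|]; [contradiction|]. auto.
    + intros W' o' HW' Ho'. destruct (Nat.eqb_spec W' T); [congruence|]. apply (CT W' o' HW'). auto.
  - destruct (HG W) as [A [B [C D]]]. split; [|split; [|split]]; auto.
    + intros o' Ho'. destruct (Nat.eqb_spec o' o) as [->|]; auto.
      exfalso. apply (CT W o HWT (or_introl eq_refl)). exact Ho'.
    + intros W' o' HW' Ho'. destruct (Nat.eqb_spec W' T) as [->|]; auto.
      simpl. intros Hin. apply (C T o' HW' Ho'). rewrite Hp. simpl. auto.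
Qed.

Lemma G_step S s t e s' : G S s -> step S s t e s' -> G S s'.
Proof.
  intros HG Hs. destruct Hs;
  first [ apply G_lock; assumption | apply G_release; assumption |
   (apply G_set_same; [exact HG | simpl; match goal with Hp : ph _ _ = _ |- _ => rewrite Hp; reflexivity end | ];
    match goal with Hp : ph _ ?X = _ |- _ => destruct (HG X) as [_ [_ [_ D]]]; rewrite Hp in D; simpl in D |- *; firstorder end) ].
Qed.

Lemma G_init S init : G S (initial_state init).
Proof. intros W; simpl. split; [constructor|]. firstorder. Qed.

Definition jw S (o0 : Obj) (r0 : R) (W : TxId) (p : phase) : Prop :=
  match p with
  | SleepW _ _ _ U _ => In o0 (wset S W) -> r0 < U
  | Validating _ wts _ _ | Installing wts _ _ => In o0 (wset S W) -> r0 < wts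
  | _ => True end.

Definition J S o0 r0 v0 (s : state) : Prop :=
  (forall v', In v' (vers s o0) -> vts v' <= r0 -> vts v' <= vts v0) /\
  forall W, jw S o0 r0 W (ph s W).

Lemma J_set S o0 r0 v0 s T p : J S o0 r0 v0 s -> jw S o0 r0 T p -> J S o0 r0 v0 (set_ph s T p).
Proof.
  intros [A B] Hj. split; [exact A|]. intros W. simpl.
  destruct (W =? T) eqn:E; [apply Nat.eqb_eq in E; subst; exact Hj | apply B].
Qed.

Lemma J_step S o0 r0 v0 s t e s' : G S s -> J S o0 r0 v0 s -> r0 < t -> step S s t e s' -> J S o0 r0 v0 s'.
Proof.
  intros HG HJ Ht Hs. destruct HJ as [JA JB].
  destruct Hs; apply J_set; try (split; [exact JA | exact JB]); simpl; auto.
  all: try (match goal with Hp : ph _ ?X = _ |- _ => specialize (JB X); rewrite Hp in JB; simpl in JB; exact JB end).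
  - intros; lra.
  - split; [|exact JB]. intros v' Hin Hle. simpl in Hin.
    destruct (Nat.eqb_spec o0 o) as [->|]; [|apply JA; auto].
    destruct Hin as [<-|Hin]; [|apply JA; auto].
    simpl in Hle. specialize (JB T). rewrite H in JB. simpl in JB.
    destruct (HG T) as [_ [_ [_ D]]]. rewrite H in D. simpl in D.
    assert (r0 < wts) by (apply JB; apply (proj2 D); left; reflexivity). lra.
Qed.

Definition noT (tr : list (R*event*state)) (T : TxId) (a b : nat) : Prop :=
  forall m t e s, (a <= m < b)%nat -> nth_error tr m = Some (t,e,s) -> ev_tx e <> T.

Definition HT (tr : list (R*event*state)) (n : nat) (T : TxId) (p : phase) : Prop :=
  match p with
  | Idle => noT tr T 0 n
  | SleepR L U g => exists j sj, (j < n)%nat /\ nth_error tr j = Some (g, ETime T L U, sj) /\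
      noT tr T 0 j /\ noT tr T (succ j) n /\ L <= g <= U
  | Reading rts _ => exists j k tj sj tk sk L, (j < k < n)%nat /\
      nth_error tr j = Some (tj, ETime T L rts, sj) /\ noT tr T 0 j /\
      nth_error tr k = Some (tk, EWake T, sk) /\ noT tr T (succ j) k /\ tj <= rts <= tk
  | _ => True end.

Definition Hs tr n s := forall T, HT tr n T (ph s T).

Lemma noT_ext tr T a n : noT tr T a n ->
  (forall t e s, nth_error tr n = Some (t,e,s) -> ev_tx e <> T) -> noT tr T a (succ n).
Proof.
  intros H1 H2 m t e s Hm Hn. destruct (Nat.eq_dec m n) as [->|].
  - eapply H2; eauto.
  - eapply H1; eauto. lia.
Qed.

Lemma HT_ext tr n T p : HT tr n T p ->
  (forall t e s, nth_error tr n = Some (t,e,s) -> ev_tx e <> T) -> HT tr (succ n) T p.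
Proof.
  intros H1 H2. destruct p; simpl in *; auto.
  - apply noT_ext; auto.
  - destruct H1 as [j [sj [A [B [C [D E]]]]]]. exists j, sj.
    split; [lia|]. split; auto. split; auto. split; auto. apply noT_ext; auto.
  - destruct H1 as [j [k [tj [sj [tk [sk [L [A B]]]]]]]].
    exists j, k, tj, sj, tk, sk, L. split; [lia|exact B].
Qed.

Lemma step_ph_other S s t e s' T : step S s t e s' -> T <> ev_tx e -> ph s' T = ph s T.
Proof.
  intros Hs Hne; destruct Hs; simpl in *;
  match goal with |- (if ?a =? ?b then _ else _) = _ =>
    destruct (Nat.eqb_spec a b); [congruence | reflexivity] end.
Qed.

Lemma Hs_step S tr s0 i sb t e s : drift_bounded S -> exec S s0 None tr ->
  Hs tr i sb -> step S sb t e s -> nth_error tr i = Some (t,e,s) -> Hs tr (succ i) s.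
Proof.
  intros Hd Hex HH Hst Hi T.
  destruct (Nat.eq_dec T (ev_tx e)) as [HT|HT].
  2: { rewrite (step_ph_other _ _ _ _ _ _ Hst HT). apply HT_ext; [apply HH|].
       intros t' e' s' Hi'. rewrite Hi in Hi'. injection Hi'; intros; subst. auto. }
  subst T.
  destruct Hst; simpl in *; rewrite Nat.eqb_refl; simpl; auto.
  - specialize (HH T). rewrite H in HH. simpl in HH.
    exists i, (set_ph s T (SleepR L U t)). split; [lia|]. split; [exact Hi|].
    split; [intros m t' e' s' Hm; apply HH; lia|]. split; [intros m t' e' s' Hm; lia|]. lra.
  - specialize (HH T). rewrite H in HH. simpl in HH.
    destruct HH as [j [sj [A [B [C [D E]]]]]].
    exists j, i, g, sj, t, (set_ph s T (Reading U (rset S T))), L.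
    split; [lia|]. split; [exact B|]. split; [exact C|]. split; [exact Hi|].
    split; [intros m t' e' s' Hm; apply D; lia|].
    assert (Hgt : g < t) by (eapply time_mono; [exact Hex| exact A | exact B | exact Hi]).
    destruct Hd as [He Hc]. specialize (Hc (mach S T) g t ltac:(lra)).
    split; [lra|]. nra.
  - specialize (HH T). rewrite H in HH. simpl in HH.
    destruct HH as [j [k [tj [sj [tk [sk [L [A B]]]]]]]].
    exists j, k, tj, sj, tk, sk, L. split; [lia|exact B].
Qed.

Lemma Hs_init tr init : Hs tr 0 (initial_state init).
Proof. intros T; simpl. intros m t e s Hm. lia. Qed.

Lemma Hs_all S tr s0 : drift_bounded S -> exec S s0 None tr -> Hs tr 0 s0 ->
  forall i t e s, nth_error tr i = Some (t,e,s) -> Hs tr (succ i) s.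
Proof.
  intros Hd Hex H0 i. induction i as [|i IH]; intros t e s Hi;
  destruct (step_at S tr s0 None _ t e s Hex Hi) as [sb [Hst [[Hz ->]|[i' [t' [e' [Heq Hi']]]]]]].
  - eapply Hs_step; eauto.
  - discriminate.
  - discriminate.
  - injection Heq; intros ->. eapply Hs_step; eauto.
Qed.

Lemma step_vers S s t e s' o : step S s t e s' -> incl (vers s o) (vers s' o).
Proof.
  intros Hs; destruct Hs; simpl; try apply incl_refl.
  destruct (Nat.eqb_spec o o0) as [->|]; [apply incl_tl, incl_refl | apply incl_refl].
Qed.

Lemma vers_mono S tr s l o : exec S s l tr ->
  forall m t e s', nth_error tr m = Some (t,e,s') -> incl (vers s o) (vers s' o).
Proof.
  intros Hex m t e s' Hm.
  apply (exec_inv S (fun x => incl (vers s o) (vers x o)) (fun _ => True)) with (tr := tr) (s := s) (l := l) (m := m) (t := t) (e := e); auto.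
  - intros s1 t1 e1 s2 H1 _ H2. eapply incl_tran; [exact H1|]. eapply step_vers; eauto.
  - apply incl_refl.
Qed.

Lemma read_inv S sb t T o rts v s : step S sb t (ERead T o rts (Some v)) s ->
  exists todo, ph sb T = Reading rts (o::todo) /\ locked sb o = false /\ In v (vers sb o) /\
    vts v <= rts /\ (forall v', In v' (vers sb o) -> vts v' <= rts -> vts v' <= vts v) /\
    s = set_ph sb T (Reading rts todo).
Proof.
  intros H; inversion H; subst. exists todo. repeat split; auto.
Qed.

Theorem lemma4 (S : system) (init : Obj -> list version)
    (tr : list (R * event * state)) :
  drift_bounded S ->
  exec S (initial_state init) None tr ->
  forall i t T o rts v s,
    nth_error tr i = Some (t, ERead T o rts (Some v), s) ->
    (* the read version is the latest version of o ever written with ts <= rts *)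
    (ever_version (initial_state init) tr o v /\ vts v <= rts /\
     forall v', ever_version (initial_state init) tr o v' -> vts v' <= rts ->
       vts v' <= vts v) /\
    (* rts lies between the start of T and the end of its rts acquisition *)
    (exists j k tj sj tk sk L,
       (j < k < i)%nat /\
       nth_error tr j = Some (tj, ETime T L rts, sj) /\
       (forall j' t' e' s', (j' < j)%nat -> nth_error tr j' = Some (t', e', s') ->
          ev_tx e' <> T) /\
       nth_error tr k = Some (tk, EWake T, sk) /\
       (forall k' t' e' s', (j < k' < k)%nat -> nth_error tr k' = Some (t', e', s') ->
          ev_tx e' <> T) /\
       tj <= rts <= tk).
Proof.
  intros Hd Hex i t T o rts v s Hi.
  destruct (step_at S tr _ None i _ _ _ Hex Hi) as [sb [Hst Hsb]].
  assert (HGall : forall m t' e' s', nth_error tr m = Some (t',e',s') -> G S s').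
  { intros m t' e' s' Hm.
    apply (exec_inv S (G S) (fun _ => True)) with (tr := tr) (s := initial_state init) (l := None) (m := m) (t := t') (e := e'); auto.
    - intros s1 t1 e1 s2 H1 _ H2. eapply G_step; eauto.
    - apply G_init. }
  assert (HGb : G S sb /\ Hs tr i sb).
  { destruct Hsb as [[-> ->]|[i' [t' [e' [-> Hi']]]]].
    - split; [apply G_init | apply Hs_init].
    - split; [eapply HGall; eauto | eapply Hs_all; eauto; apply Hs_init]. }
  destruct HGb as [HGb HHb].
  destruct (read_inv _ _ _ _ _ _ _ _ Hst) as [todo [Hph [Hlock [Hin [Hle [Hmax ->]]]]]].
  pose proof (HHb T) as HT. rewrite Hph in HT. simpl in HT.
  destruct HT as [j [k [tj [sj [tk [sk [L [Hjk [Hj [Hnj [Hk [Hnk Htr]]]]]]]]]]]].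
  split.
  2: { exists j, k, tj, sj, tk, sk, L.
       split; [exact Hjk|]. split; [exact Hj|]. split.
       { intros j' t' e' s' Hj' Hm. apply (Hnj j' t' e' s'); [lia|exact Hm]. }
       split; [exact Hk|]. split; [|exact Htr].
       intros k' t' e' s' Hk' Hm. apply (Hnk k' t' e' s'); [lia|exact Hm]. }
  assert (Htk : tk < t) by (eapply time_mono; [exact Hex| |exact Hk|exact Hi]; lia).
  set (s := set_ph sb T (Reading rts todo)) in *.
  assert (HJs : J S o rts v s).
  { apply J_set; [|simpl; exact I]. split; [exact Hmax|].
    intros W. destruct (HGb W) as [_ [B [_ D]]]. revert B D.
    destruct (ph sb W); simpl; intros B D; auto; intros Hw; exfalso.
    - rewrite (B o (D o Hw)) in Hlock; discriminate.
    - rewrite (B o (D o Hw)) in Hlock; discriminate.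
    - rewrite (B o (proj1 D o Hw)) in Hlock; discriminate. }
  assert (HGs : G S s) by (eapply G_step; eauto).
  assert (HJall : forall m t' e' s', nth_error (skipn (succ i) tr) m = Some (t',e',s') -> J S o rts v s').
  { intros m t' e' s' Hm.
    refine (proj2 (exec_inv S (fun x => G S x /\ J S o rts v x) (fun t' => rts < t') _
       (skipn (succ i) tr) s (Some t) (exec_suffix _ _ _ _ _ _ _ _ Hex Hi) (conj HGs HJs) _ m t' e' s' Hm)).
    - intros s1 t1 e1 s2 [H1 H1'] Hq H2. split; [eapply G_step|eapply J_step]; eauto.
    - intros m' t1 e1 s1 Hm'.
      pose proof (exec_times _ _ _ _ (exec_suffix _ _ _ _ _ _ _ _ Hex Hi) _ _ _ _ Hm'). lra. }
  split; [right; exists i, t, (ERead T o rts (Some v)), s; split; [exact Hi| exact Hin]|].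
  split; [exact Hle|].
  intros v' Hev Hle'.
  destruct Hev as [Hinit | [m [t' [e' [s' [Hm Hin']]]]]].
  - apply (proj1 HJs); auto. apply (vers_mono _ _ _ _ o Hex _ _ _ _ Hi). exact Hinit.
  - destruct (Nat.lt_total m i) as [Hlt|[Heq|Hgt]].
    + apply (proj1 HJs); auto.
      pose proof (exec_suffix _ _ _ _ _ _ _ _ Hex Hm) as Hsuf.
      apply (vers_mono _ _ _ _ o Hsuf (i - succ m)%nat t (ERead T o rts (Some v)) s); [|exact Hin'].
      rewrite nth_error_skipn. replace (succ m + (i - succ m))%nat with i by lia. exact Hi.
    + subst m. rewrite Hi in Hm. injection Hm; intros; subst. apply (proj1 HJs); auto.
    + refine (proj1 (HJall (m - succ i)%nat t' e' s' _) v' Hin' Hle').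
      rewrite nth_error_skipn. replace (succ i + (m - succ i))%nat with m by lia. exact Hm.
Qed.
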